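(* Let $\tau$ be a counterclockwise permutation for monotone non-identical linear functions $f_1,\dots,f_n$. Then the cyclic sequence $(f^{\tau_0},\dots,f^{\tau_{n-1}})$ is strictly unimodal. Moreover, if $f_1,\dots,f_n$ are neither colinear nor potentially identical, then for every $k\in\{0,\dots,n-1\}$ (indices mod $n$, with $\tau_n=\tau_0$), $f^{\tau_k}=f^{\tau_{k+1}}$ implies exactly one of: (i) $f^{\tau_k}=f^{\tau_{k+1}}=\min_{0\le i<n}f^{\tau_i}$ and $\theta(f_{\tau(k+1)})+\pi=_{2\pi}\theta(f^{\tau_k})$; (ii) $f^{\tau_k}=f^{\tau_{k+1}}=\max_{0\le i<n}f^{\tau_i}$ and $\theta(f_{\tau(k+1)})=_{2\pi}\theta(f^{\tau_k})$.
   Context: A linear function is $f(x)=ax+b$; monotone means $a>0$; identical means $f(x)=x$. $\vec f=(b,1-a)^\top$ and $\theta(f)\in[0,2\pi)$ is its polar angle ($\bot$ if $\vec f=0$); $\theta_1=_{2\pi}\theta_2$ means $\theta_1-\theta_2\in2\pi\mathbb{Z}$. For a permutation $\sigma$ of $[n]$, $f^\sigma=f_{\sigma(n)}\circ\cdots\circ f_{\sigma(1)}$; these composites are totally ordered pointwise. $\sigma$ is counterclockwise if, after discarding positions with identical $f_{\sigma(i)}$, there is $k$ with $\theta(f_{\sigma(k)})\le\cdots\le\theta(f_{\sigma(n)})\le\theta(f_{\sigma(1)})\le\cdots\le\theta(f_{\sigma(k-1)})$. $f_1,\dots,f_n$ are colinear if some $\lambda$ satisfies $\theta(f_i)\in\{\lambda,\lambda+\pi\}+2\pi\mathbb{Z}$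 or $\theta(f_i)=\bot$ for all $i$, and potentially identical if $f^\sigma(x)=x$ for some counterclockwise $\sigma$. The $k$-shift is $\tau_k(i)=\tau(i+k)$ for $i\le n-k$, $\tau_k(i)=\tau(i+k-n)$ otherwise. A cyclic sequence $(x_0,\dots,x_{n-1})$ is unimodal if there are $k,\ell$ with $x_k\le x_{k+1}\le\cdots\le x_\ell\ge x_{\ell+1}\ge\cdots\ge x_{k-1}\ge x_k$ (indices mod $n$); it is strictly unimodal if it is unimodal and whenever $x_j=x_{j+1}$ this common value is the minimum or the maximum of the sequence. *)

(* Defs.v *)
From Stdlib Require Import Reals Lra Lia ZArith Arith ClassicalEpsilon.
Open Scope R_scope.

(* A linear function f(x) = a x + b is represented by the pair (a, b). *)
Definition lin := (R * R)%type.
Definition lin_eval (f : lin) (x : R) : R := fst f * x + snd f.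
Definition monotone (f : lin) : Prop := 0 < fst f.
Definition identical (f : lin) : Prop := forall x, lin_eval f x = x.

Definition lin_comp (g f : lin) : lin := (fst g * fst f, fst g * snd f + snd g).

Definition lin_le (f g : lin) : Prop := forall x, lin_eval f x <= lin_eval g x.

Definition vec (f : lin) : R * R := (snd f, 1 - fst f).

Definition polar_angle (v : R * R) (t : R) : Prop :=
  0 <= t < 2 * PI /\
  exists r, 0 < r /\ fst v = r * cos t /\ snd v = r * sin t.

Definition angle_of (v : R * R) : R :=
  epsilon (inhabits 0) (polar_angle v).

(* theta f : None stands for "bottom" (vec f = 0) *)
Definition theta (f : lin) : option R :=
  let v := vec f in
  match Req_EM_T (fst v) 0, Req_EM_T (snd v) 0 with
  | left _, left _ => None
  | _, _ => Some (angle_of v)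
  end.

Definition eq2pi (a b : R) : Prop := exists z : Z, a - b = 2 * PI * IZR z.

Definition eq2pi_opt (a b : option R) : Prop :=
  match a, b with
  | Some a', Some b' => eq2pi a' b'
  | _, _ => False
  end.

Definition add_pi (a : option R) : option R :=
  match a with Some t => Some (t + PI) | None => None end.

Definition is_perm (n : nat) (s : nat -> nat) : Prop :=
  (forall i, (1 <= i <= n)%nat -> (1 <= s i <= n)%nat) /\
  (forall i j, (1 <= i <= n)%nat -> (1 <= j <= n)%nat -> s i = s j -> i = j).

Fixpoint comp_prefix (f : nat -> lin) (s : nat -> nat) (m : nat) : lin :=
  match m with
  | O => (1, 0)
  | S m' => lin_comp (f (s (S m'))) (comp_prefix f s m')
  end.

Definition composite (n : nat) (f : nat -> lin) (s : nat -> nat) : lin :=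
  comp_prefix f s n.

Definition shift (n : nat) (tau : nat -> nat) (k : nat) : nat -> nat :=
  fun i => if (i <=? n - k)%nat then tau (i + k)%nat else tau (i + k - n)%nat.

(* sigma is counterclockwise: after discarding the positions with identical
   f_{sigma(i)}, the angles, read cyclically from some position k, are
   nondecreasing.  rot k i is the i-th position (1-based) when starting at k. *)
Definition rot (n k i : nat) : nat := ((k + i - 2) mod n + 1)%nat.

Definition counterclockwise (n : nat) (f : nat -> lin) (s : nat -> nat) : Prop :=
  exists k, (1 <= k <= n)%nat /\
    forall i j, (1 <= i)%nat -> (i <= j)%nat -> (j <= n)%nat ->
      ~ identical (f (s (rot n k i))) -> ~ identical (f (s (rot n k j))) ->
      forall ti tj, theta (f (s (rot n k i))) = Some ti ->
                    theta (f (s (rot n k j))) = Some tj -> ti <= tj.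

Definition colinear (n : nat) (f : nat -> lin) : Prop :=
  exists lam, forall i, (1 <= i <= n)%nat ->
    theta (f i) = None \/
    exists t, theta (f i) = Some t /\ (eq2pi t lam \/ eq2pi t (lam + PI)).

Definition potentially_identical (n : nat) (f : nat -> lin) : Prop :=
  exists s, is_perm n s /\ counterclockwise n f s /\
    forall x, lin_eval (composite n f s) x = x.

(* cyclic sequences (x_0, ..., x_{n-1}) given as x : nat -> T read mod n *)
Definition unimodal {T : Type} (le : T -> T -> Prop) (n : nat) (x : nat -> T) : Prop :=
  exists k l, (k < n)%nat /\ (l < n)%nat /\
    let d := ((l + n - k) mod n)%nat in
    (forall i, (i < d)%nat -> le (x ((k + i) mod n)%nat) (x ((k + i + 1) mod n)%nat)) /\
    (forall i, (d <= i < n)%nat -> le (x ((k + i + 1) mod n)%nat) (x ((k + i) mod n)%nat)).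

Definition is_min {T : Type} (le : T -> T -> Prop) (n : nat) (x : nat -> T) (v : T) :=
  forall i, (i < n)%nat -> le v (x i).
Definition is_max {T : Type} (le : T -> T -> Prop) (n : nat) (x : nat -> T) (v : T) :=
  forall i, (i < n)%nat -> le (x i) v.

Definition strictly_unimodal {T : Type} (le : T -> T -> Prop) (n : nat) (x : nat -> T) : Prop :=
  unimodal le n x /\
  forall j, (j < n)%nat -> x j = x ((j + 1) mod n)%nat ->
    is_min le n x (x j) \/ is_max le n x (x j).

Definition shift_seq (n : nat) (f : nat -> lin) (tau : nat -> nat) (k : nat) : lin :=
  composite n f (shift n tau (k mod n)).

(* Main.v *)
Require Import Defs.
From Stdlib Require Import Reals Lra Lia ZArith Arith ClassicalEpsilon.
Open Scope R_scope.

Lemma sq_eq_nonneg (a b : R) : 0 <= a -> 0 <= b -> a * a = b * b -> a = b.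
Proof.
  intros Ha Hb H.
  assert (E : (a - b) * (a + b) = 0) by lra.
  apply Rmult_integral in E. destruct E; lra.
Qed.

Lemma polar_exists (v : R * R) : ~ (fst v = 0 /\ snd v = 0) -> exists t, polar_angle v t.
Proof.
  destruct v as [x y]; simpl; intros Hnz.
  assert (Hp : 0 < x*x + y*y).
  { destruct (Req_dec x 0); destruct (Req_dec y 0); try tauto; nra. }
  set (r := sqrt (x*x+y*y)).
  assert (Hr : 0 < r) by (apply sqrt_lt_R0; lra).
  assert (Hr2 : r * r = x*x+y*y) by (apply sqrt_sqrt; lra).
  set (c := x / r).
  assert (Hc : -1 <= c <= 1).
  { unfold c; split.
    - apply (Rmult_le_reg_r r); [lra|]. field_simplify; [|lra]. nra.
    - apply (Rmult_le_reg_r r); [lra|]. field_simplify; [|lra]. nra. }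
  set (t0 := acos c).
  assert (Hcos : cos t0 = c) by (apply cos_acos; auto).
  assert (Hb := acos_bound c). fold t0 in Hb.
  assert (Hs0 : 0 <= sin t0) by (apply sin_ge_0; lra).
  assert (Hsc := sin2_cos2 t0). unfold Rsqr in Hsc.
  assert (Hxc : x = r * cos t0) by (rewrite Hcos; unfold c; field; lra).
  assert (Hsq : (r * sin t0) * (r * sin t0) = y * y).
  { replace ((r * sin t0) * (r * sin t0)) with (r*r*(sin t0 * sin t0)) by ring.
    replace (sin t0 * sin t0) with (1 - cos t0 * cos t0) by lra.
    replace (r * r * (1 - cos t0 * cos t0)) with (r*r - (r * cos t0) * (r * cos t0)) by ring.
    rewrite <- Hxc. lra. }
  assert (Hrs : 0 <= r * sin t0) by nra.
  pose proof PI_RGT_0 as HPI.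
  destruct (Rle_dec 0 y) as [Hy|Hy].
  - exists t0. split; [lra|]. exists r. split; [lra|]. split; [auto|].
    simpl; symmetry; apply sq_eq_nonneg; [lra|lra|auto].
  - assert (Hys : r * sin t0 = - y) by (apply sq_eq_nonneg; [lra|lra|rewrite Hsq; ring]).
    assert (Ht0 : 0 < t0).
    { destruct (Req_dec t0 0) as [E|E]; [|lra].
      rewrite E, sin_0 in Hys. lra. }
    exists (2*PI - t0). split; [lra|]. exists r. split; [lra|].
    simpl; rewrite cos_minus, sin_minus, cos_2PI, sin_2PI. split; nra.
Qed.

Lemma vec_nz (f : lin) : ~ identical f -> ~ (fst (vec f) = 0 /\ snd (vec f) = 0).
Proof.
  destruct f as [a b]; unfold identical, vec, lin_eval; simpl.
  intros H [H1 H2]; apply H; intros x. subst. nra.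
Qed.

Lemma angle_of_spec (v : R * R) : ~ (fst v = 0 /\ snd v = 0) -> polar_angle v (angle_of v).
Proof.
  intros H. unfold angle_of. apply epsilon_spec. now apply polar_exists.
Qed.

Lemma theta_some (v : lin) : ~ (fst (vec v) = 0 /\ snd (vec v) = 0) ->
  theta v = Some (angle_of (vec v)).
Proof.
  intros H. unfold theta.
  destruct (Req_EM_T (fst (vec v)) 0); destruct (Req_EM_T (snd (vec v)) 0); tauto.
Qed.

Definition fl (x : R) : Z := (up (x / PI) - 1)%Z.

Lemma fl_spec x : IZR (fl x) * PI <= x < (IZR (fl x) + 1) * PI.
Proof.
  unfold fl. pose proof PI_RGT_0. destruct (archimed (x / PI)) as [H1 H2].
  rewrite minus_IZR. simpl.
  assert (E : x = (x / PI) * PI) by (field; lra).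
  split.
  - rewrite E at 2. apply Rmult_le_compat_r; lra.
  - rewrite E at 1. apply Rmult_lt_compat_r; lra.
Qed.

Lemma mulPI_lt a b : a * PI < b * PI -> a < b.
Proof. intros H. pose proof PI_RGT_0. apply Rmult_lt_reg_r with PI; lra. Qed.

Lemma Z_of_lt a b : IZR a < IZR b + 1 -> (a <= b)%Z.
Proof. intros H. rewrite <- plus_IZR in H. apply lt_IZR in H. lia. Qed.

Lemma fl_unique x z : IZR z * PI <= x < (IZR z + 1) * PI -> fl x = z.
Proof.
  intros [H1 H2]. destruct (fl_spec x) as [H3 H4].
  assert (A : IZR z < IZR (fl x) + 1) by (apply mulPI_lt; lra).
  assert (B : IZR (fl x) < IZR z + 1) by (apply mulPI_lt; lra).
  apply Z_of_lt in A. apply Z_of_lt in B. lia.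
Qed.

Definition lev (x : R) : Z :=
  if Req_EM_T x (IZR (fl x) * PI) then (2 * fl x)%Z else (2 * fl x + 1)%Z.

Lemma lev_even x z : x = IZR z * PI -> lev x = (2 * z)%Z.
Proof.
  intros H. pose proof PI_RGT_0.
  assert (F : fl x = z) by (apply fl_unique; lra).
  unfold lev. rewrite F. destruct (Req_EM_T x (IZR z * PI)); tauto.
Qed.

Lemma lev_odd x z : IZR z * PI < x < (IZR z + 1) * PI -> lev x = (2 * z + 1)%Z.
Proof.
  intros H. pose proof PI_RGT_0.
  assert (F : fl x = z) by (apply fl_unique; lra).
  unfold lev. rewrite F. destruct (Req_EM_T x (IZR z * PI)); [lra|auto].
Qed.

Lemma lev_cases x : exists z,
  (x = IZR z * PI /\ lev x = (2 * z)%Z) \/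
  (IZR z * PI < x < (IZR z + 1) * PI /\ lev x = (2 * z + 1)%Z).
Proof.
  exists (fl x). destruct (fl_spec x) as [H1 H2].
  destruct (Req_dec x (IZR (fl x) * PI)) as [E|E].
  - left. split; auto. now apply lev_even.
  - right. assert (H3 : IZR (fl x) * PI < x < (IZR (fl x) + 1) * PI) by lra.
    split; auto. now apply lev_odd.
Qed.

Lemma lev_mono x y : x <= y -> (lev x <= lev y)%Z.
Proof.
  intros Hxy. pose proof PI_RGT_0.
  destruct (lev_cases x) as [z [[Ex Lx]|[Ex Lx]]];
  destruct (lev_cases y) as [w [[Ey Ly]|[Ey Ly]]]; rewrite Lx, Ly.
  - assert (IZR z < IZR w + 1) by (apply mulPI_lt; lra).
    apply Z_of_lt in H0. lia.
  - assert (IZR z < IZR w + 1) by (apply mulPI_lt; lra).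
    apply Z_of_lt in H0. lia.
  - assert (IZR z < IZR w) by (apply mulPI_lt; lra).
    apply lt_IZR in H0. lia.
  - assert (IZR z < IZR w + 1) by (apply mulPI_lt; lra).
    apply Z_of_lt in H0. lia.
Qed.

Lemma lev_shift x : lev (x - 2 * PI) = (lev x - 4)%Z.
Proof.
  destruct (lev_cases x) as [z [[Ex Lx]|[Ex Lx]]]; rewrite Lx.
  - rewrite (lev_even _ (z - 2)); [lia|]. rewrite minus_IZR. simpl. lra.
  - rewrite (lev_odd _ (z - 2)); [lia|]. rewrite minus_IZR. simpl. lra.
Qed.

Lemma sin_Zperiod x (m : Z) : sin (x + 2 * IZR m * PI) = sin x.
Proof.
  destruct (Z_le_gt_dec 0 m) as [H|H].
  - rewrite <- (Z2Nat.id m H). rewrite <- INR_IZR_INZ. apply sin_period.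
  - assert (H' : (0 <= - m)%Z) by lia.
    rewrite <- (sin_period (x + 2 * IZR m * PI) (Z.to_nat (- m))).
    rewrite INR_IZR_INZ, Z2Nat.id by lia. rewrite opp_IZR. f_equal. ring.
Qed.

Lemma interior_sign x z : IZR z * PI < x < (IZR z + 1) * PI ->
  (Z.Even z -> 0 < sin x) /\ (Z.Odd z -> sin x < 0).
Proof.
  intros H. split; intros [m Hm]; subst z.
  - rewrite <- (sin_Zperiod x (- m)). rewrite mult_IZR, opp_IZR in *.
    apply sin_gt_0; nra.
  - rewrite <- (sin_Zperiod x (- m)). rewrite plus_IZR, mult_IZR, opp_IZR in *.
    apply sin_lt_0; nra.
Qed.

Lemma lev_sin_pos x m : lev x = (4 * m + 1)%Z -> 0 < sin x.
Proof.
  destruct (lev_cases x) as [z [[Ex Lx]|[Ex Lx]]]; rewrite Lx; intros E; [lia|].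
  apply (interior_sign x z Ex). exists m. lia.
Qed.

Lemma lev_sin_neg x m : lev x = (4 * m + 3)%Z -> sin x < 0.
Proof.
  destruct (lev_cases x) as [z [[Ex Lx]|[Ex Lx]]]; rewrite Lx; intros E; [lia|].
  apply (interior_sign x z Ex). exists m. lia.
Qed.

Lemma lev_sin_zero x m : lev x = (2 * m)%Z -> x = IZR m * PI.
Proof.
  destruct (lev_cases x) as [z [[Ex Lx]|[Ex Lx]]]; rewrite Lx; intros E; [|lia].
  assert (z = m) by lia. subst; auto.
Qed.

Lemma lev_classify x : exists m,
  lev x = (4 * m)%Z \/ lev x = (4 * m + 1)%Z \/ lev x = (4 * m + 2)%Z \/ lev x = (4 * m + 3)%Z.
Proof.
  exists (lev x / 4)%Z. pose proof (Z.div_mod (lev x) 4).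
  pose proof (Z.mod_pos_bound (lev x) 4). lia.
Qed.

Lemma lev_same x y : Rabs (x - y) < PI ->
  ((sin x = 0 /\ sin y = 0) \/ 0 < sin x * sin y) -> lev x = lev y.
Proof.
  intros Hd Hs. pose proof PI_RGT_0.
  apply Rabs_def2 in Hd. destruct Hd as [Hd1 Hd2].
  destruct (lev_cases x) as [z [[Ex Lx]|[Ex Lx]]];
  destruct (lev_cases y) as [w [[Ey Ly]|[Ey Ly]]]; rewrite Lx, Ly.
  - assert (A : IZR z < IZR w + 1) by (apply mulPI_lt; lra).
    assert (B : IZR w < IZR z + 1) by (apply mulPI_lt; lra).
    apply Z_of_lt in A. apply Z_of_lt in B. lia.
  - exfalso. assert (sin x = 0) by (apply sin_eq_0_1; eauto).
    destruct (Z.Even_or_Odd w) as [Hw|Hw]; apply (interior_sign y w Ey) in Hw;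
    destruct Hs as [[_ Hs]|Hs]; try lra; rewrite H0 in Hs; lra.
  - exfalso. assert (sin y = 0) by (apply sin_eq_0_1; eauto).
    destruct (Z.Even_or_Odd z) as [Hw|Hw]; apply (interior_sign x z Ex) in Hw;
    destruct Hs as [[Hs _]|Hs]; try lra; rewrite H0 in Hs; lra.
  - assert (A : IZR z < IZR w + 2) by (apply mulPI_lt; lra).
    assert (B : IZR w < IZR z + 2) by (apply mulPI_lt; lra).
    assert (A' : IZR z < IZR (w+1) + 1) by (rewrite plus_IZR; simpl; lra).
    assert (B' : IZR w < IZR (z+1) + 1) by (rewrite plus_IZR; simpl; lra).
    apply Z_of_lt in A'. apply Z_of_lt in B'.
    destruct (Z.eq_dec z w) as [E|E]; [subst; lia|exfalso].
    destruct Hs as [[Hs _]|Hs].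
    { destruct (Z.Even_or_Odd z) as [Hw|Hw]; apply (interior_sign x z Ex) in Hw; lra. }
    destruct (Z.Even_or_Odd z) as [[m Hm]|[m Hm]].
    + assert (Hz : 0 < sin x) by (apply (interior_sign x z Ex); exists m; auto).
      assert (Hw : sin y < 0) by (apply (interior_sign y w Ey);
        destruct (Z.eq_dec w (z+1)); [exists m|exists (m-1)%Z]; lia).
      nra.
    + assert (Hz : sin x < 0) by (apply (interior_sign x z Ex); exists m; auto).
      assert (Hw : 0 < sin y) by (apply (interior_sign y w Ey);
        destruct (Z.eq_dec w (z+1)); [exists (m+1)%Z|exists m]; lia).
      nra.
Qed.

Lemma chain_up (y : nat -> R) a b :
  (forall i, (a <= i < b)%nat -> y i <= y (S i)) ->
  forall i j, (a <= i <= j)%nat -> (j <= b)%nat -> y i <= y j.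
Proof.
  intros H i j Hij Hjb. induction j as [|j IH].
  - assert (i = 0)%nat by lia. subst; lra.
  - destruct (Nat.eq_dec i (S j)) as [E|E]; [subst; lra|].
    specialize (IH ltac:(lia) ltac:(lia)). specialize (H j ltac:(lia)). lra.
Qed.

Lemma first_le (g : nat -> Z) (X : Z) j : (g j <= X)%Z ->
  exists k, (k <= j)%nat /\ (g k <= X)%Z /\ (k = 0%nat \/ (X < g (k - 1)%nat)%Z).
Proof.
  induction j as [|j IH]; intros H.
  - exists 0%nat. repeat split; auto.
  - destruct (Z_le_gt_dec (g j) X) as [H1|H1].
    + destruct (IH H1) as [k [Hk [Hk2 Hk3]]]. exists k. repeat split; auto.
    + exists (S j). repeat split; auto. right. replace (S j - 1)%nat with j by lia. lia.
Qed.

Section Comb.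
Variables (n : nat) (l : nat -> Z) (y : nat -> R).
Hypothesis Hn : (1 <= n)%nat.
Hypothesis Hmono : forall e, (l (S e) <= l e)%Z.
Hypothesis Hper : forall e, l (e + n)%nat = (l e - 4)%Z.
Hypothesis Hy : forall e, y (e + n)%nat = y e.
Hypothesis H0 : forall e m, l e = (4 * m)%Z -> y (S e) = y e.
Hypothesis H2 : forall e m, l e = (4 * m + 2)%Z -> y (S e) = y e.
Hypothesis H1 : forall e m, l e = (4 * m + 1)%Z -> y e < y (S e).
Hypothesis H3 : forall e m, l e = (4 * m + 3)%Z -> y (S e) < y e.

Lemma mono_gen a b : (a <= b)%nat -> (l b <= l a)%Z.
Proof.
  intros H. induction b as [|b IH].
  - assert (a = 0)%nat by lia. subst; lia.
  - destruct (Nat.eq_dec a (S b)) as [E|E]; [subst; lia|].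
    specialize (IH ltac:(lia)). specialize (Hmono b). lia.
Qed.

Lemma per_gen e k : y (e + k * n)%nat = y e.
Proof.
  induction k as [|k IH]; [f_equal; lia|].
  replace (e + S k * n)%nat with ((e + k * n) + n)%nat by lia. rewrite Hy; auto.
Qed.

Lemma ystep_up e M : (4 * M - 4 <= l e <= 4 * M - 2)%Z -> y e <= y (S e).
Proof.
  intros H.
  assert (l e = 4 * (M-1) \/ l e = 4 * (M-1) + 1 \/ l e = 4 * (M-1) + 2)%Z as [E|[E|E]] by lia.
  - rewrite (H0 _ _ E); lra.
  - pose proof (H1 _ _ E); lra.
  - rewrite (H2 _ _ E); lra.
Qed.

Lemma ystep_up' e M : (4 * M + 1 <= l e <= 4 * M + 2)%Z -> y e <= y (S e).
Proof. intros H. apply (ystep_up e (M+1)). lia. Qed.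

Lemma ystep_down e M : (4 * M - 2 <= l e <= 4 * M)%Z -> y (S e) <= y e.
Proof.
  intros H.
  assert (l e = 4 * M \/ l e = 4 * (M-1) + 3 \/ l e = 4 * (M-1) + 2)%Z as [E|[E|E]] by lia.
  - rewrite (H0 _ _ E); lra.
  - pose proof (H3 _ _ E); lra.
  - rewrite (H2 _ _ E); lra.
Qed.

Lemma y_reduce e : (forall r, (r <= n)%nat -> y (e + r)%nat <= y e) -> forall i, y i <= y e.
Proof.
  intros H i.
  assert (G : forall r, y (e + r)%nat <= y e).
  { intros r. induction r as [r IH] using lt_wf_ind.
    destruct (le_lt_dec r n) as [Hr|Hr]; [auto|].
    replace (e + r)%nat with ((e + (r - n)) + n)%nat by lia. rewrite Hy. apply IH. lia. }
  rewrite <- (per_gen i e). replace (i + e * n)%nat with (e + (i + e * n - e))%nat by nia.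
  apply G.
Qed.

Lemma max_at e m : l e = (4 * m)%Z -> forall i, y i <= y e.
Proof.
  intros He. apply y_reduce. intros r Hr.
  destruct (Z_le_gt_dec (4 * m - 1) (l (e + r)%nat)) as [Hl|Hl].
  -
    assert (P : forall r', (r' <= r)%nat -> y (e + r')%nat <= y e).
    { intros r' Hr'. induction r' as [|r' IH]; [rewrite Nat.add_0_r; lra|].
      assert (B1 : (l (e + r)%nat <= l (e + r')%nat)%Z) by (apply mono_gen; lia).
      assert (B2 : (l (e + r')%nat <= l e)%Z) by (apply mono_gen; lia).
      replace (e + S r')%nat with (S (e + r')) by lia.
      pose proof (ystep_down (e + r') m ltac:(lia)). specialize (IH ltac:(lia)). lra. }
    apply P; lia.
  -
    rewrite <- (Hy e).
    apply (chain_up y (e + r) (e + n)); try lia.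
    intros i Hi. apply (ystep_up i m).
    assert (B1 : (l (e + n)%nat <= l i)%Z) by (apply mono_gen; lia).
    assert (B2 : (l i <= l (e + r)%nat)%Z) by (apply mono_gen; lia).
    rewrite Hper in B1. lia.
Qed.

Lemma even_of_eq e : y (S e) = y e -> exists m, l e = (4 * m)%Z \/ l e = (4 * m + 2)%Z.
Proof.
  intros E. exists (l e / 4)%Z.
  pose proof (Z.div_mod (l e) 4). pose proof (Z.mod_pos_bound (l e) 4).
  assert (l e mod 4 = 0 \/ l e mod 4 = 1 \/ l e mod 4 = 2 \/ l e mod 4 = 3)%Z as [F|[F|[F|F]]] by lia.
  - left; lia.
  - exfalso. pose proof (H1 e (l e / 4) ltac:(lia)). lra.
  - right; lia.
  - exfalso. pose proof (H3 e (l e / 4) ltac:(lia)). lra.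
Qed.

Lemma unimod : exists K d, (d < n)%nat /\
  (forall i, (i < d)%nat -> y (K + i)%nat <= y (K + i + 1)%nat) /\
  (forall i, (d <= i < n)%nat -> y (K + i + 1)%nat <= y (K + i)%nat).
Proof.
  set (l0 := l 0%nat).
  set (M := ((l0 - 2) / 4)%Z).
  assert (HM : (4 * M + 2 <= l0 < 4 * M + 6)%Z).
  { pose proof (Z.div_mod (l0 - 2) 4). pose proof (Z.mod_pos_bound (l0 - 2) 4). unfold M. lia. }
  assert (Hln : l n = (l0 - 4)%Z) by (unfold l0; rewrite <- (Hper 0%nat); reflexivity).
  destruct (first_le l (4 * M + 2) n ltac:(lia)) as [k [Hkn [Hk1 Hk2]]].
  assert (W : forall i, (i < n)%nat -> (4 * M - 2 <= l (k + i)%nat <= 4 * M + 2)%Z).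
  { intros i Hi. split.
    - destruct Hk2 as [Hk2|Hk2].
      + subst k. assert (B : (l n <= l (0 + i)%nat)%Z) by (apply mono_gen; lia). lia.
      + assert (B : (l (k - 1 + n)%nat <= l (k + i)%nat)%Z) by (apply mono_gen; lia).
        rewrite Hper in B. lia.
    - assert (B : (l (k + i)%nat <= l k)%Z) by (apply mono_gen; lia). lia. }
  assert (Hkn' : l (k + n)%nat = (l k - 4)%Z) by apply Hper.
  destruct (first_le (fun i => l (k + i)%nat) (4 * M) n ltac:(cbv beta; lia))
    as [d [Hdn [Hd1 Hd2]]]. cbv beta in Hd1, Hd2.
  assert (Inc : forall i, (i < d)%nat -> y (k + i)%nat <= y (k + i + 1)%nat).
  { intros i Hi. rewrite Nat.add_1_r. apply (ystep_up' _ M).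
    destruct Hd2 as [Hd2|Hd2]; [lia|].
    assert (B : (l (k + (d - 1))%nat <= l (k + i)%nat)%Z) by (apply mono_gen; lia).
    specialize (W i ltac:(lia)). lia. }
  assert (Dec : forall i, (d <= i < n)%nat -> y (k + i + 1)%nat <= y (k + i)%nat).
  { intros i Hi. rewrite Nat.add_1_r. apply (ystep_down _ M).
    assert (B : (l (k + i)%nat <= l (k + d)%nat)%Z) by (apply mono_gen; lia).
    specialize (W i ltac:(lia)). lia. }
  destruct (Nat.eq_dec d n) as [Ed|Ed].
  - subst d. exists k, 0%nat. split; [lia|]. split; [intros; lia|].
    assert (C1 : forall i, (i <= n)%nat -> y k <= y (k + i)%nat).
    { intros i Hi. rewrite <- (Nat.add_0_r k) at 1.
      apply (chain_up y k (k + n)); try lia.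
      intros j Hj. replace j with (k + (j - k))%nat by lia.
      rewrite <- Nat.add_succ_r, <- Nat.add_1_r, Nat.add_assoc. apply Inc. lia. }
    assert (C2 : forall i, (i <= n)%nat -> y (k + i)%nat <= y k).
    { intros i Hi. rewrite <- (Hy k).
      apply (chain_up y (k + 0) (k + n)); try lia.
      intros j Hj. replace j with (k + (j - k))%nat by lia.
      rewrite <- Nat.add_succ_r, <- Nat.add_1_r, Nat.add_assoc. apply Inc. lia. }
    intros i Hi. pose proof (C1 i ltac:(lia)). pose proof (C2 i ltac:(lia)).
    pose proof (C1 (i+1)%nat ltac:(lia)). pose proof (C2 (i+1)%nat ltac:(lia)).
    rewrite Nat.add_assoc in *. lra.
  - exists k, d. split; [lia|]. split; auto.
Qed.

End Comb.

Lemma min_at (n : nat) (l : nat -> Z) (y : nat -> R) :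
  (1 <= n)%nat ->
  (forall e, (l (S e) <= l e)%Z) ->
  (forall e, l (e + n)%nat = (l e - 4)%Z) ->
  (forall e, y (e + n)%nat = y e) ->
  (forall e m, l e = (4 * m)%Z -> y (S e) = y e) ->
  (forall e m, l e = (4 * m + 2)%Z -> y (S e) = y e) ->
  (forall e m, l e = (4 * m + 1)%Z -> y e < y (S e)) ->
  (forall e m, l e = (4 * m + 3)%Z -> y (S e) < y e) ->
  forall e m, l e = (4 * m + 2)%Z -> forall i, y e <= y i.
Proof.
  intros Hn Hm Hp Hy H0 H2 H1 H3 e m He i.
  assert (X := max_at n (fun e => l e - 2)%Z (fun e => - y e) Hn).
  cbv beta in X.
  assert (X' : - y i <= - y e); [|lra].
  apply (X ltac:(intros; specialize (Hm e0); lia)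
           ltac:(intros; rewrite Hp; lia)
           ltac:(intros; rewrite Hy; lra)) with (m := m); try lia.
  - intros e0 m0 E. rewrite (H2 e0 m0 ltac:(lia)). lra.
  - intros e0 m0 E. rewrite (H0 e0 (m0+1)%Z ltac:(lia)). lra.
  - intros e0 m0 E. pose proof (H3 e0 m0 ltac:(lia)). lra.
  - intros e0 m0 E. pose proof (H1 e0 (m0+1)%Z ltac:(lia)). lra.
Qed.

Lemma lin_comp_assoc a b c : lin_comp a (lin_comp b c) = lin_comp (lin_comp a b) c.
Proof. destruct a, b, c; unfold lin_comp; simpl; f_equal; ring. Qed.
Lemma lin_comp_id_r a : lin_comp a (1, 0) = a.
Proof. destruct a; unfold lin_comp; simpl; f_equal; ring. Qed.
Lemma lin_comp_id_l a : lin_comp (1, 0) a = a.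
Proof. destruct a; unfold lin_comp; simpl; f_equal; ring. Qed.

Fixpoint Q (g : nat -> lin) (k m : nat) : lin :=
  match m with
  | O => (1, 0)
  | S m' => lin_comp (g (k + m')%nat) (Q g k m')
  end.

Lemma comp_prefix_Q f s g k m :
  (forall i, (1 <= i <= m)%nat -> f (s i) = g (k + i - 1)%nat) ->
  comp_prefix f s m = Q g k m.
Proof.
  induction m as [|m IH]; intros H; simpl; auto.
  rewrite IH by (intros; apply H; lia). rewrite H by lia.
  f_equal. f_equal. lia.
Qed.

Lemma comp_prefix_ext f s s' m :
  (forall i, (1 <= i <= m)%nat -> f (s i) = f (s' i)) ->
  comp_prefix f s m = comp_prefix f s' m.
Proof.
  induction m as [|m IH]; intros H; simpl; auto.
  rewrite IH by (intros; apply H; lia). rewrite H by lia. auto.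
Qed.

Lemma Q_split g k m : Q g k (S m) = lin_comp (Q g (S k) m) (g k).
Proof.
  induction m as [|m IH].
  - simpl. rewrite Nat.add_0_r, lin_comp_id_r, lin_comp_id_l. auto.
  - change (Q g k (S (S m))) with (lin_comp (g (k + S m)%nat) (Q g k (S m))).
    rewrite IH. simpl. rewrite lin_comp_assoc. f_equal. f_equal. f_equal. lia.
Qed.

Lemma Q_ext g k k' m : (forall i, (i < m)%nat -> g (k + i)%nat = g (k' + i)%nat) ->
  Q g k m = Q g k' m.
Proof.
  induction m as [|m IH]; intros H; simpl; auto.
  rewrite IH by (intros; apply H; lia). rewrite H by lia. auto.
Qed.

Definition Gf (n : nat) (f : nat -> lin) (tau : nat -> nat) (k : nat) : lin :=
  f (tau ((k mod n) + 1)%nat).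

Lemma Gf_mod n f tau k k' : (k mod n = k' mod n)%nat -> Gf n f tau k = Gf n f tau k'.
Proof. intros H. unfold Gf. rewrite H. auto. Qed.

Lemma mod_add_n n k : (1 <= n)%nat -> ((k + n) mod n = k mod n)%nat.
Proof.
  intros Hn. replace (k + n)%nat with (k + 1 * n)%nat by lia.
  apply Nat.Div0.mod_add.
Qed.

Lemma shift_seq_Q n f tau k : (1 <= n)%nat ->
  shift_seq n f tau k = Q (Gf n f tau) k n.
Proof.
  intros Hn. unfold shift_seq, composite.
  assert (Hk : (k mod n < n)%nat) by (apply Nat.mod_upper_bound; lia).
  rewrite (comp_prefix_Q _ _ (Gf n f tau) (k mod n)).
  - apply Q_ext. intros i Hi. apply Gf_mod.
    rewrite Nat.Div0.add_mod_idemp_l. auto.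
  - intros i Hi. unfold Defs.shift, Gf. set (kk := (k mod n)%nat) in *.
    destruct (Nat.leb_spec i (n - kk)) as [H|H].
    + rewrite Nat.mod_small by lia. f_equal. f_equal. lia.
    + replace (kk + i - 1)%nat with ((kk + i - 1 - n) + 1 * n)%nat by lia.
      rewrite Nat.Div0.mod_add, Nat.mod_small by lia. f_equal. f_equal. lia.
Qed.

Lemma shift_seq_rel n f tau k : (1 <= n)%nat ->
  lin_comp (shift_seq n f tau (S k)) (Gf n f tau k) =
  lin_comp (Gf n f tau k) (shift_seq n f tau k).
Proof.
  intros Hn. rewrite !shift_seq_Q by auto.
  rewrite <- Q_split.
  change (Q (Gf n f tau) k (S n)) with
    (lin_comp (Gf n f tau (k + n)%nat) (Q (Gf n f tau) k n)).
  f_equal. apply Gf_mod. apply mod_add_n; auto.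
Qed.

Lemma shift_seq_mod n f tau k k' : (k mod n = k' mod n)%nat ->
  shift_seq n f tau k = shift_seq n f tau k'.
Proof. intros H. unfold shift_seq. rewrite H. auto. Qed.

Lemma shift_seq_per n f tau k : (1 <= n)%nat ->
  shift_seq n f tau (k + n) = shift_seq n f tau k.
Proof. intros Hn. apply shift_seq_mod. apply mod_add_n; auto. Qed.

Lemma composite_shift0 n f tau : (1 <= n)%nat ->
  composite n f tau = shift_seq n f tau 0.
Proof.
  intros Hn. unfold shift_seq. rewrite Nat.Div0.mod_0_l.
  unfold composite. apply comp_prefix_ext. intros i Hi. unfold Defs.shift.
  destruct (Nat.leb_spec i (n - 0)); [|lia]. rewrite Nat.add_0_r. auto.
Qed.

Lemma polar_sin_pos w p : polar_angle w p -> 0 < snd w -> 0 < p < PI.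
Proof.
  intros [[H1 H2] [r [Hr [Hx Hy]]]] Hs. pose proof PI_RGT_0.
  assert (Sp : 0 < sin p) by (rewrite Hy in Hs; nra).
  split.
  - destruct (Req_dec p 0) as [E|E]; [rewrite E, sin_0 in Sp; lra|lra].
  - destruct (Rlt_dec p PI) as [E|E]; auto. exfalso.
    destruct (Req_dec p PI) as [E2|E2]; [rewrite E2, sin_PI in Sp; lra|].
    assert (sin p < 0) by (apply sin_lt_0; lra). lra.
Qed.

Lemma polar_sin_neg w p : polar_angle w p -> snd w < 0 -> PI < p < 2 * PI.
Proof.
  intros [[H1 H2] [r [Hr [Hx Hy]]]] Hs. pose proof PI_RGT_0.
  assert (Sp : sin p < 0) by (rewrite Hy in Hs; nra).
  split; [|lra].
  destruct (Rlt_dec PI p) as [E|E]; auto. exfalso.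
  assert (0 <= sin p) by (apply sin_ge_0; lra). lra.
Qed.

Lemma polar_axis w p : polar_angle w p -> snd w = 0 ->
  (0 < fst w -> p = 0) /\ (fst w < 0 -> p = PI).
Proof.
  intros [[H1 H2] [r [Hr [Hx Hy]]]] Hs. pose proof PI_RGT_0.
  assert (Sp : sin p = 0) by (rewrite Hy in Hs; nra).
  destruct (sin_eq_0_0 p Sp) as [z Hz].
  assert (A : IZR z < 2).
  { apply Rmult_lt_reg_r with PI; lra. }
  assert (B : -1 < IZR z).
  { apply Rmult_lt_reg_r with PI; lra. }
  apply lt_IZR in A. replace (-1) with (IZR (-1)) in B by auto. apply lt_IZR in B.
  assert (z = 0 \/ z = 1)%Z as [E|E] by lia; subst z; simpl in Hz.
  - rewrite Rmult_0_l in Hz. subst p. rewrite cos_0 in Hx. split; intros; lra.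
  - rewrite Rmult_1_l in Hz. subst p. rewrite cos_PI in Hx. split; intros; lra.
Qed.

Lemma cross_polar u w t p : polar_angle u t -> polar_angle w p ->
  exists r q, 0 < r /\ 0 < q /\ fst u * snd w - snd u * fst w = r * q * sin (p - t).
Proof.
  intros [_ [r [Hr [Hx Hy]]]] [_ [q [Hq [Hx' Hy']]]].
  exists r, q. split; auto. split; auto.
  rewrite Hx, Hy, Hx', Hy', sin_minus. ring.
Qed.

Lemma polar_range w p : polar_angle w p -> 0 <= p < 2 * PI.
Proof. intros [H _]; auto. Qed.

Section Main.
Variables (n : nat) (f : nat -> lin) (tau : nat -> nat).
Hypothesis Hn : (1 <= n)%nat.
Hypothesis Hf : forall i, (1 <= i <= n)%nat -> monotone (f i) /\ ~ identical (f i).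
Hypothesis Hperm : is_perm n tau.

Definition G k := Gf n f tau k.
Definition x k := shift_seq n f tau k.

Lemma G_good k : 0 < fst (G k) /\ ~ identical (G k).
Proof.
  unfold G, Gf. apply Hf. apply (proj1 Hperm).
  assert (k mod n < n)%nat by (apply Nat.mod_upper_bound; lia). lia.
Qed.

Lemma G_mod k k' : (k mod n = k' mod n)%nat -> G k = G k'.
Proof. apply Gf_mod. Qed.

Lemma G_per k : G (k + n) = G k.
Proof. apply G_mod. apply mod_add_n; auto. Qed.

Lemma x_per k : x (k + n) = x k.
Proof. apply shift_seq_per; auto. Qed.

Lemma x_mod k k' : (k mod n = k' mod n)%nat -> x k = x k'.
Proof. apply shift_seq_mod. Qed.

Definition A := fst (x 0).
Definition B k := snd (x k).

Lemma x_rel k : lin_comp (x (S k)) (G k) = lin_comp (G k) (x k).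
Proof. apply shift_seq_rel; auto. Qed.

Lemma x_fst k : fst (x k) = A.
Proof.
  induction k as [|k IH]; [auto|].
  pose proof (f_equal fst (x_rel k)) as E. unfold lin_comp in E; simpl in E.
  destruct (G_good k) as [Ha _].
  apply (Rmult_eq_reg_r (fst (G k))); [|lra]. rewrite E, IH. ring.
Qed.

Lemma B_step k : B (S k) = fst (G k) * B k + snd (G k) - A * snd (G k).
Proof.
  pose proof (f_equal snd (x_rel k)) as E. unfold lin_comp in E; simpl in E.
  unfold B. rewrite x_fst in E. lra.
Qed.

Lemma x_eq k : x k = (A, B k).
Proof. rewrite <- (x_fst k). unfold B. destruct (x k); auto. Qed.

Lemma B_per k : B (k + n) = B k.
Proof. unfold B. rewrite x_per. auto. Qed.

Lemma B_mod k k' : (k mod n = k' mod n)%nat -> B k = B k'.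
Proof. intros H. unfold B. rewrite (x_mod k k' H). auto. Qed.

Lemma triv_all : A = 1 -> B 0 = 0 -> forall k, B k = 0.
Proof.
  intros HA HB k. induction k as [|k IH]; auto.
  rewrite B_step, IH, HA. ring.
Qed.

Lemma sign_keep : A = 1 -> forall k, (0 < B 0 -> 0 < B k) /\ (B 0 < 0 -> B k < 0).
Proof.
  intros HA k. induction k as [|k IH]; [split; auto|].
  rewrite B_step, HA. destruct (G_good k) as [Ha _].
  replace (fst (G k) * B k + snd (G k) - 1 * snd (G k)) with (fst (G k) * B k) by ring.
  destruct IH as [I1 I2]. split; intros H; [specialize (I1 H)|specialize (I2 H)]; nra.
Qed.

Definition nontriv := ~ (A = 1 /\ B 0 = 0).

Lemma vec_x k : vec (x k) = (B k, 1 - A).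
Proof. rewrite x_eq. auto. Qed.

Lemma W_nz : nontriv -> forall k, ~ (fst (vec (x k)) = 0 /\ snd (vec (x k)) = 0).
Proof.
  intros Hnt k. rewrite vec_x. simpl. intros [H1 H2].
  assert (HA : A = 1) by lra. apply Hnt. split; auto.
  destruct (Rtotal_order (B 0) 0) as [L|[E|L]]; auto; exfalso;
  destruct (sign_keep HA k); [specialize (H0 L)|specialize (H L)]; lra.
Qed.

Definition t k := angle_of (vec (G k)).
Definition phi k := angle_of (vec (x k)).

Lemma pt k : polar_angle (vec (G k)) (t k).
Proof. apply angle_of_spec, vec_nz, G_good. Qed.

Lemma theta_G k : theta (G k) = Some (t k).
Proof. apply theta_some, vec_nz, G_good. Qed.

Lemma pphi (Hnt : nontriv) k : polar_angle (vec (x k)) (phi k).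
Proof. apply angle_of_spec, W_nz; auto. Qed.

Lemma theta_x (Hnt : nontriv) k : theta (x k) = Some (phi k).
Proof. apply theta_some, W_nz; auto. Qed.

Lemma t_mod k k' : (k mod n = k' mod n)%nat -> t k = t k'.
Proof. intros H. unfold t. rewrite (G_mod k k' H). auto. Qed.

Lemma phi_mod k k' : (k mod n = k' mod n)%nat -> phi k = phi k'.
Proof. intros H. unfold phi. rewrite (x_mod k k' H). auto. Qed.

Lemma phi_step (Hnt : nontriv) k : Rabs (phi (S k) - phi k) < PI.
Proof.
  pose proof PI_RGT_0.
  pose proof (pphi Hnt k) as P1. pose proof (pphi Hnt (S k)) as P2.
  rewrite vec_x in P1, P2.
  destruct (Rtotal_order A 1) as [L|[E|L]].
  - apply polar_sin_pos in P1; [|simpl; lra]. apply polar_sin_pos in P2; [|simpl; lra].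
    apply Rabs_def1; lra.
  - assert (B 0 <> 0) by (intros Z; apply Hnt; auto).
    destruct (sign_keep E k) as [S1 S2]. destruct (sign_keep E (S k)) as [S3 S4].
    apply polar_axis in P1; [|simpl; lra]. apply polar_axis in P2; [|simpl; lra].
    simpl in P1, P2. destruct P1 as [Q1 Q2]. destruct P2 as [Q3 Q4].
    destruct (Rtotal_order (B 0) 0) as [Lt|[Eq|Gt]]; [|lra|].
    + rewrite (Q2 (S2 Lt)), (Q4 (S4 Lt)). rewrite Rminus_diag, Rabs_R0. lra.
    + rewrite (Q1 (S1 Gt)), (Q3 (S3 Gt)). rewrite Rminus_diag, Rabs_R0. lra.
  - apply polar_sin_neg in P1; [|simpl; lra]. apply polar_sin_neg in P2; [|simpl; lra].
    apply Rabs_def1; lra.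
Qed.

Lemma D_sin (Hnt : nontriv) k : exists r q, 0 < r /\ 0 < q /\
  B (S k) - B k = r * q * sin (phi k - t k).
Proof.
  destruct (cross_polar _ _ _ _ (pt k) (pphi Hnt k)) as [r [q [Hr [Hq E]]]].
  exists r, q. split; auto. split; auto. rewrite <- E. rewrite vec_x. unfold vec; simpl.
  rewrite B_step. ring.
Qed.

Lemma D'_sin (Hnt : nontriv) k : exists r q, 0 < r /\ 0 < q /\
  fst (G k) * (B (S k) - B k) = r * q * sin (phi (S k) - t k).
Proof.
  destruct (cross_polar _ _ _ _ (pt k) (pphi Hnt (S k))) as [r [q [Hr [Hq E]]]].
  exists r, q. split; auto. split; auto. rewrite <- E. rewrite vec_x. unfold vec; simpl.
  rewrite B_step. ring.
Qed.


Variable p : nat.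
Hypothesis Hp : (1 <= p <= n)%nat.
Hypothesis Hccw : forall i j, (1 <= i)%nat -> (i <= j)%nat -> (j <= n)%nat ->
      ~ identical (f (tau (rot n p i))) -> ~ identical (f (tau (rot n p j))) ->
      forall ti tj, theta (f (tau (rot n p i))) = Some ti ->
                    theta (f (tau (rot n p j))) = Some tj -> ti <= tj.

Definition c := (p - 1)%nat.
Definition T r := t (c + r).

Lemma G_rot i : (1 <= i)%nat -> f (tau (rot n p i)) = G (c + (i - 1)).
Proof.
  intros Hi. unfold G, Gf, rot, c. do 3 f_equal. f_equal. lia.
Qed.

Lemma T_mono r : (S r < n)%nat -> T r <= T (S r).
Proof.
  intros Hr. unfold T.
  assert (E1 := G_rot (S r) ltac:(lia)). assert (E2 := G_rot (S (S r)) ltac:(lia)).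
  replace (S r - 1)%nat with r in E1 by lia. replace (S (S r) - 1)%nat with (S r) in E2 by lia.
  apply (Hccw (S r) (S (S r))); try lia; rewrite ?E1, ?E2.
  - apply G_good.
  - apply G_good.
  - apply theta_G.
  - apply theta_G.
Qed.

Lemma T_bound r : 0 <= T r < 2 * PI.
Proof. apply (polar_range _ _ (pt _)). Qed.

Definition L e := T (e mod n) + 2 * INR (e / n) * PI.

Lemma L_mono e : L e <= L (S e).
Proof.
  unfold L. pose proof PI_RGT_0.
  pose proof (Nat.div_mod_eq e n) as De.
  assert (Hr : (e mod n < n)%nat) by (apply Nat.mod_upper_bound; lia).
  destruct (Nat.lt_ge_cases (S (e mod n)) n) as [Hc|Hc].
  - assert (Q1 : (e / n = S e / n)%nat) by (apply (Nat.div_unique _ _ _ (S (e mod n))); lia).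
    assert (Q2 : (S (e mod n) = S e mod n)%nat) by (apply (Nat.mod_unique _ _ (e / n)); lia).
    rewrite <- Q1, <- Q2. pose proof (T_mono _ Hc). lra.
  - assert (Q1 : (S (e / n) = S e / n)%nat) by (apply (Nat.div_unique _ _ _ 0); lia).
    assert (Q2 : 0%nat = S e mod n) by (apply (Nat.mod_unique _ _ (S (e / n))); lia).
    rewrite <- Q1, <- Q2, S_INR.
    pose proof (T_bound (e mod n)). pose proof (T_bound 0). lra.
Qed.

Lemma L_mono_gen a b : (a <= b)%nat -> L a <= L b.
Proof.
  intros H. induction b as [|b IH].
  - assert (a = 0)%nat by lia. subst; lra.
  - destruct (Nat.eq_dec a (S b)) as [E|E]; [subst; lra|].
    specialize (IH ltac:(lia)). pose proof (L_mono b). lra.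
Qed.

Lemma L_per e : L (e + n) = L e + 2 * PI.
Proof.
  unfold L. rewrite mod_add_n by auto.
  replace (e + n)%nat with (e + 1 * n)%nat by lia. rewrite Nat.div_add by lia.
  rewrite plus_INR. simpl. ring.
Qed.

Lemma L_t e : L e = t (c + e) + 2 * INR (e / n) * PI.
Proof.
  unfold L, T. f_equal. apply t_mod. apply Nat.Div0.add_mod_idemp_r.
Qed.

Definition Psi e := phi (c + e) - L e.
Definition lv e := lev (Psi e).
Definition y e := B (c + e).

Lemma sin_shift a w : sin (a - 2 * INR w * PI) = sin a.
Proof.
  pose proof (sin_period (a - 2 * INR w * PI) w) as E.
  replace (a - 2 * INR w * PI + 2 * INR w * PI) with a in E by ring. auto.
Qed.

Lemma sin_Psi e : sin (Psi e) = sin (phi (c + e) - t (c + e)).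
Proof.
  unfold Psi. rewrite L_t. rewrite <- (sin_shift (phi (c + e) - t (c + e)) (e / n)). f_equal. ring.
Qed.

Lemma sign_combine r q r' q' s1 s2 a D :
  0 < r -> 0 < q -> 0 < r' -> 0 < q' -> 0 < a ->
  D = r * q * s1 -> a * D = r' * q' * s2 ->
  (s1 = 0 /\ s2 = 0) \/ 0 < s1 * s2.
Proof.
  intros Hr Hq Hr' Hq' Ha E1 E2.
  assert (P1 : 0 < r * q) by nra. assert (P2 : 0 < r' * q') by nra.
  destruct (Req_dec D 0) as [Z|Z].
  - left. split.
    + apply (Rmult_eq_reg_l (r * q)); [rewrite Rmult_0_r; lra|lra].
    + apply (Rmult_eq_reg_l (r' * q')); [rewrite Rmult_0_r; rewrite Z in E2; lra|lra].
  - right. assert (P3 : 0 < a * D * D) by (assert (0 < D * D) by nra; nra).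
    assert (E3 : s1 * s2 * ((r * q) * (r' * q')) = a * D * D) by (rewrite E2 at 1; rewrite E1 at 1; ring).
    destruct (Rle_lt_dec (s1 * s2) 0) as [N|N]; auto.
    assert (0 <= - (s1 * s2) * (r * q * (r' * q'))) by (apply Rmult_le_pos; nra). lra.
Qed.

Section NT.
Hypothesis Hnt : nontriv.

Lemma lv_mono e : (lv (S e) <= lv e)%Z.
Proof.
  set (Psi' := phi (c + S e) - L e).
  assert (E : lev Psi' = lv e).
  { unfold lv. apply lev_same.
    - unfold Psi', Psi. replace (c + S e)%nat with (S (c + e)) by lia.
      replace (phi (S (c + e)) - L e - (phi (c + e) - L e)) with (phi (S (c + e)) - phi (c + e)) by ring.
      apply phi_step; auto.
    - destruct (D_sin Hnt (c + e)) as [r [q [Hr [Hq E1]]]].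
      destruct (D'_sin Hnt (c + e)) as [r' [q' [Hr' [Hq' E2]]]].
      rewrite <- sin_Psi in E1.
      assert (S' : sin Psi' = sin (phi (S (c + e)) - t (c + e))).
      { unfold Psi'. rewrite L_t.
        rewrite <- (sin_shift (phi (S (c + e)) - t (c + e)) (e / n)).
        replace (c + S e)%nat with (S (c + e)) by lia. f_equal. ring. }
      rewrite <- S' in E2.
      destruct (sign_combine r q r' q' (sin (Psi e)) (sin Psi') (fst (G (c + e)))
        (B (S (c + e)) - B (c + e)) Hr Hq Hr' Hq' (proj1 (G_good _)) E1 E2) as [[Z1 Z2]|Pz].
      + left; auto.
      + right. rewrite Rmult_comm; auto. }
  rewrite <- E. apply lev_mono. unfold Psi, Psi'. pose proof (L_mono e). lra.
Qed.

Lemma lv_per e : lv (e + n) = (lv e - 4)%Z.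
Proof.
  unfold lv. rewrite <- lev_shift. f_equal. unfold Psi.
  rewrite L_per. rewrite (phi_mod (c + (e + n)) (c + e)); [ring|].
  rewrite Nat.add_assoc. apply mod_add_n; auto.
Qed.

Lemma y_per e : y (e + n) = y e.
Proof. unfold y. rewrite Nat.add_assoc. apply B_per. Qed.

Lemma y_D e : exists r q, 0 < r /\ 0 < q /\ y (S e) - y e = r * q * sin (Psi e).
Proof.
  destruct (D_sin Hnt (c + e)) as [r [q [Hr [Hq E1]]]]. exists r, q.
  split; auto. split; auto. rewrite sin_Psi. unfold y.
  replace (c + S e)%nat with (S (c + e)) by lia. auto.
Qed.

Lemma Hy0 e m : lv e = (2 * m)%Z -> y (S e) = y e.
Proof.
  intros E. apply lev_sin_zero in E.
  assert (Z : sin (Psi e) = 0) by (apply sin_eq_0_1; eauto).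
  destruct (y_D e) as [r [q [_ [_ D]]]]. rewrite Z in D. lra.
Qed.

Lemma Hy1 e m : lv e = (4 * m + 1)%Z -> y e < y (S e).
Proof.
  intros E. apply lev_sin_pos in E.
  destruct (y_D e) as [r [q [Hr [Hq D]]]].
  assert (0 < r * q * sin (Psi e)) by (apply Rmult_lt_0_compat; [nra|auto]). lra.
Qed.

Lemma Hy3 e m : lv e = (4 * m + 3)%Z -> y (S e) < y e.
Proof.
  intros E. apply lev_sin_neg in E.
  destruct (y_D e) as [r [q [Hr [Hq D]]]].
  assert (0 < r * q * (- sin (Psi e))) by (apply Rmult_lt_0_compat; [nra|lra]). lra.
Qed.


Lemma y_max e m : lv e = (4 * m)%Z -> forall i, y i <= y e.
Proof.
  apply (max_at n lv y Hn lv_mono lv_per y_per).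
  - intros e0 m0 E. apply (Hy0 e0 (2 * m0)). lia.
  - intros e0 m0 E. apply (Hy0 e0 (2 * m0 + 1)). lia.
  - apply Hy1.
  - apply Hy3.
Qed.

Lemma y_min e m : lv e = (4 * m + 2)%Z -> forall i, y e <= y i.
Proof.
  apply (min_at n lv y Hn lv_mono lv_per y_per).
  - intros e0 m0 E. apply (Hy0 e0 (2 * m0)). lia.
  - intros e0 m0 E. apply (Hy0 e0 (2 * m0 + 1)). lia.
  - apply Hy1.
  - apply Hy3.
Qed.

Lemma y_even e : y (S e) = y e -> exists m, lv e = (4 * m)%Z \/ lv e = (4 * m + 2)%Z.
Proof.
  apply (even_of_eq n lv y Hn).
  - apply Hy1.
  - apply Hy3.
Qed.

Lemma y_unimod : exists K d, (d < n)%nat /\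
  (forall i, (i < d)%nat -> y (K + i)%nat <= y (K + i + 1)%nat) /\
  (forall i, (d <= i < n)%nat -> y (K + i + 1)%nat <= y (K + i)%nat).
Proof.
  apply (unimod n lv y Hn lv_mono lv_per y_per).
  - intros e0 m0 E. apply (Hy0 e0 (2 * m0)). lia.
  - intros e0 m0 E. apply (Hy0 e0 (2 * m0 + 1)). lia.
  - apply Hy1.
  - apply Hy3.
Qed.

End NT.

Lemma c_lt : (c < n)%nat.
Proof. unfold c; lia. Qed.

Lemma B_y i : B i = y (i + n - c).
Proof.
  unfold y. pose proof c_lt. replace (c + (i + n - c))%nat with (i + n)%nat by lia.
  symmetry; apply B_per.
Qed.

Lemma lin_le_B i j : B i <= B j -> lin_le (x i) (x j).
Proof. intros H. rewrite !x_eq. unfold lin_le, lin_eval. simpl. intros; lra. Qed.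

Lemma x_B i j : x i = x j -> B i = B j.
Proof. intros H. unfold B. rewrite H. auto. Qed.

Lemma idx_arith k0 d : (k0 < n)%nat -> (d < n)%nat -> (((k0 + d) mod n + n - k0) mod n = d)%nat.
Proof.
  intros H1 H2. destruct (Nat.lt_ge_cases (k0 + d) n) as [L|L].
  - rewrite (Nat.mod_small (k0 + d)) by auto.
    replace (k0 + d + n - k0)%nat with (d + 1 * n)%nat by lia.
    rewrite Nat.Div0.mod_add. apply Nat.mod_small; auto.
  - replace (k0 + d)%nat with ((k0 + d - n) + 1 * n)%nat by lia.
    rewrite Nat.Div0.mod_add, (Nat.mod_small (k0 + d - n)) by lia.
    replace (k0 + d - n + n - k0)%nat with d by lia. apply Nat.mod_small; auto.
Qed.


Lemma part1_nt (Hnt : nontriv) : strictly_unimodal lin_le n (shift_seq n f tau).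
Proof.
  pose proof c_lt as Hc.
  split.
  - destruct (y_unimod Hnt) as [K [d [Hd [Inc Dec]]]].
    set (k0 := ((c + K) mod n)%nat).
    assert (Hk0 : (k0 < n)%nat) by (apply Nat.mod_upper_bound; lia).
    assert (Bi : forall i, B ((k0 + i) mod n) = y (K + i)).
    { intros i. unfold y. apply B_mod. rewrite Nat.Div0.mod_mod.
      unfold k0. rewrite Nat.Div0.add_mod_idemp_l. f_equal. lia. }
    exists k0, ((k0 + d) mod n)%nat. split; auto. split; [apply Nat.mod_upper_bound; lia|].
    cbv zeta. rewrite idx_arith by auto. split.
    + intros i Hi. apply lin_le_B. rewrite <- Nat.add_assoc, !Bi.
      rewrite Nat.add_assoc. apply Inc; auto.
    + intros i Hi. apply lin_le_B. rewrite <- Nat.add_assoc, !Bi.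
      rewrite Nat.add_assoc. apply Dec; auto.
  - intros j Hj E. change (x j = x ((j + 1) mod n)) in E. apply x_B in E.
    rewrite (B_mod ((j + 1) mod n) (j + 1)) in E by apply Nat.Div0.mod_mod.
    set (e := (j + n - c)%nat).
    assert (Ye : y e = B j) by (rewrite B_y; auto).
    assert (YSe : y (S e) = B (j + 1)).
    { rewrite (B_y (j + 1)). f_equal. unfold e. lia. }
    destruct (y_even Hnt e ltac:(congruence)) as [m [Em|Em]].
    + right. intros i Hi. apply lin_le_B. rewrite B_y, <- Ye. apply (y_max Hnt e m Em).
    + left. intros i Hi. apply lin_le_B. rewrite (B_y i), <- Ye. apply (y_min Hnt e m Em).
Qed.

Lemma pi_not (z1 z2 : Z) : PI = 2 * PI * IZR z1 - 2 * PI * IZR z2 -> False.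
Proof.
  intros H. pose proof PI_RGT_0.
  assert (E : 1 = 2 * (IZR z1 - IZR z2)).
  { apply (Rmult_eq_reg_r PI); [|lra]. lra. }
  rewrite <- minus_IZR in E. replace 2 with (IZR 2) in E by auto.
  rewrite <- mult_IZR in E. apply eq_IZR in E. lia.
Qed.

Lemma part2_nt (Hnt : nontriv) : forall k, (k < n)%nat ->
     shift_seq n f tau k = shift_seq n f tau (k + 1) ->
     let A0 := is_min lin_le n (shift_seq n f tau) (shift_seq n f tau k) /\
              eq2pi_opt (add_pi (theta (f (tau (k + 1)%nat))))
                        (theta (shift_seq n f tau k)) in
     let B0 := is_max lin_le n (shift_seq n f tau) (shift_seq n f tau k) /\
              eq2pi_opt (theta (f (tau (k + 1)%nat)))
                        (theta (shift_seq n f tau k)) in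
     (A0 /\ ~ B0) \/ (~ A0 /\ B0).
Proof.
  intros k Hk E. cbv zeta.
  pose proof c_lt as Hc.
  change (x k = x (k + 1)) in E. apply x_B in E.
  assert (HG : f (tau (k + 1)%nat) = G k).
  { unfold G, Gf. rewrite Nat.mod_small by auto. auto. }
  change (shift_seq n f tau k) with (x k).
  rewrite HG, theta_G, (theta_x Hnt). simpl.
  set (e := (k + n - c)%nat).
  assert (Ye : y e = B k) by (rewrite B_y; auto).
  assert (YSe : y (S e) = B (k + 1)).
  { rewrite (B_y (k + 1)). f_equal. unfold e. lia. }
  assert (Hpsi : Psi e = phi k - t k - 2 * INR (e / n) * PI).
  { unfold Psi. rewrite L_t.
    rewrite (phi_mod (c + e) k), (t_mod (c + e) k); [ring| |];
    unfold e; replace (c + (k + n - c))%nat with (k + n)%nat by lia; apply mod_add_n; auto. }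
  set (w := INR (e / n)) in *.
  assert (Hw : w = IZR (Z.of_nat (e / n))) by (unfold w; apply INR_IZR_INZ).
  destruct (y_even Hnt e ltac:(congruence)) as [m [Em|Em]].
  - assert (Ps : Psi e = IZR (2 * m) * PI) by (apply lev_sin_zero; unfold lv in Em; lia).
    rewrite mult_IZR in Ps.
    right. split.
    + intros [_ [z Hz]]. apply (pi_not z (- (m + Z.of_nat (e / n)))).
      rewrite opp_IZR, plus_IZR, <- Hw. nra.
    + split.
      * intros i Hi. apply lin_le_B. rewrite B_y, <- Ye. apply (y_max Hnt e m Em).
      * exists (- (m + Z.of_nat (e / n)))%Z. rewrite opp_IZR, plus_IZR, <- Hw. nra.
  - assert (Ps : Psi e = IZR (2 * m + 1) * PI) by (apply lev_sin_zero; unfold lv in Em; lia).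
    rewrite plus_IZR, mult_IZR in Ps.
    left. split.
    + split.
      * intros i Hi. apply lin_le_B. rewrite (B_y i), <- Ye. apply (y_min Hnt e m Em).
      * exists (- (m + Z.of_nat (e / n)))%Z. rewrite opp_IZR, plus_IZR, <- Hw. nra.
    + intros [_ [z Hz]]. apply (pi_not (- (m + Z.of_nat (e / n))) z).
      rewrite opp_IZR, plus_IZR, <- Hw. nra.
Qed.

Lemma all_le_su : (forall i j, lin_le (x i) (x j)) -> strictly_unimodal lin_le n (shift_seq n f tau).
Proof.
  intros H. split.
  - exists 0%nat, 0%nat. split; [lia|]. split; [lia|]. simpl. split.
    + intros; apply H.
    + intros; apply H.
  - intros j Hj _. left. intros i Hi. apply H.
Qed.

Lemma part1 : strictly_unimodal lin_le n (shift_seq n f tau).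
Proof.
  destruct (Req_EM_T A 1) as [HA|HA]; [destruct (Req_EM_T (B 0) 0) as [HB|HB]|].
  - apply all_le_su. intros i j. apply lin_le_B. rewrite !(triv_all HA HB). lra.
  - assert (Hnt : nontriv) by (intros [_ E]; auto). clear HA HB.
    apply part1_nt; auto.
  - assert (Hnt : nontriv) by (intros [E _]; auto). clear HA.
    apply part1_nt; auto.
Qed.

Lemma triv_pi : A = 1 -> B 0 = 0 -> potentially_identical n f.
Proof.
  intros HA HB. exists tau. split; auto. split.
  - exists p. split; auto.
  - intros z. rewrite composite_shift0 by auto. change (lin_eval (x 0) z = z).
    rewrite x_eq, HA, HB. unfold lin_eval; simpl. ring.
Qed.

Lemma final :
  strictly_unimodal lin_le n (shift_seq n f tau) /\
  (~ colinear n f -> ~ potentially_identical n f ->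
   forall k, (k < n)%nat ->
     shift_seq n f tau k = shift_seq n f tau (k + 1) ->
     let A := is_min lin_le n (shift_seq n f tau) (shift_seq n f tau k) /\
              eq2pi_opt (add_pi (theta (f (tau (k + 1)%nat))))
                        (theta (shift_seq n f tau k)) in
     let B := is_max lin_le n (shift_seq n f tau) (shift_seq n f tau k) /\
              eq2pi_opt (theta (f (tau (k + 1)%nat)))
                        (theta (shift_seq n f tau k)) in
     (A /\ ~ B) \/ (~ A /\ B)).
Proof.
  split; [apply part1|].
  intros _ Hpi. apply part2_nt.
  intros [HA HB]. apply Hpi. apply triv_pi; auto.
Qed.
End Main.

Theorem mainTheorem13 (n : nat) (f : nat -> lin) (tau : nat -> nat) :
  (1 <= n)%nat ->
  (forall i, (1 <= i <= n)%nat -> monotone (f i) /\ ~ identical (f i)) ->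
  is_perm n tau ->
  counterclockwise n f tau ->
  strictly_unimodal lin_le n (shift_seq n f tau) /\
  (~ colinear n f -> ~ potentially_identical n f ->
   forall k, (k < n)%nat ->
     shift_seq n f tau k = shift_seq n f tau (k + 1) ->
     let A := is_min lin_le n (shift_seq n f tau) (shift_seq n f tau k) /\
              eq2pi_opt (add_pi (theta (f (tau (k + 1)%nat))))
                        (theta (shift_seq n f tau k)) in
     let B := is_max lin_le n (shift_seq n f tau) (shift_seq n f tau k) /\
              eq2pi_opt (theta (f (tau (k + 1)%nat)))
                        (theta (shift_seq n f tau k)) in
     (A /\ ~ B) \/ (~ A /\ B)).
Proof.
  intros Hn Hf Hperm [p [Hp Hccw]].
  exact (final n f tau Hn Hf Hperm p Hp Hccw).
Qed.
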